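(* Let $\boldsymbol{y},\boldsymbol{x}\in\mathbb{R}^n$ and let $\boldsymbol{Z}=[\boldsymbol{z}_1\ \cdots\ \boldsymbol{z}_{k_z}]$ be an $n\times k_z$ matrix of full column rank, with $\boldsymbol{x}^T\boldsymbol{P}_Z\boldsymbol{x}\neq0$, $\boldsymbol{z}_\ell^T\boldsymbol{x}\neq0$ and $\boldsymbol{z}_{\ell|\{-\ell\}}^T\boldsymbol{x}\neq 0$ for all $\ell$. Let $\hat{\boldsymbol{\pi}}=(\boldsymbol{Z}^T\boldsymbol{Z})^{-1}\boldsymbol{Z}^T\boldsymbol{x}$ and $w_\ell=\hat\pi_\ell\,\boldsymbol{z}_\ell^T\boldsymbol{x}\,(\boldsymbol{x}^T\boldsymbol{P}_Z\boldsymbol{x})^{-1}$. Then $\sum_{\ell=1}^{k_z}w_\ell=1$ and $$\hat\beta_{2sls}=\sum_{\ell=1}^{k_z}w_\ell\hat\beta_\ell=\sum_{\ell=1}^{k_z}w_\ell\hat\beta^*_\ell .$$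
   Context: $\boldsymbol{P}_A=\boldsymbol{A}(\boldsymbol{A}^T\boldsymbol{A})^{-1}\boldsymbol{A}^T$, $\boldsymbol{M}_A=\boldsymbol{I}_n-\boldsymbol{P}_A$. $\hat\beta_{2sls}=(\boldsymbol{x}^T\boldsymbol{P}_Z\boldsymbol{x})^{-1}\boldsymbol{x}^T\boldsymbol{P}_Z\boldsymbol{y}$. $\boldsymbol{Z}_{\{-\ell\}}$ is $\boldsymbol{Z}$ with column $\boldsymbol{z}_\ell$ removed, $\boldsymbol{z}_{\ell|\{-\ell\}}=\boldsymbol{M}_{Z_{\{-\ell\}}}\boldsymbol{z}_\ell$, $\hat\beta_\ell=\boldsymbol{z}_{\ell|\{-\ell\}}^T\boldsymbol{y}/\boldsymbol{z}_{\ell|\{-\ell\}}^T\boldsymbol{x}$ (the just-identified IV estimator with $\boldsymbol{z}_\ell$ as instrument and the other instruments as controls), and $\hat\beta^*_\ell=\boldsymbol{z}_\ell^T\boldsymbol{y}/\boldsymbol{z}_\ell^T\boldsymbol{x}$ (the just-identified IV estimator with $\boldsymbol{z}_\ell$ as sole instrument and the others omitted). *)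

(* Defs.v *)
From HB Require Import structures.
From mathcomp Require Import all_boot all_order all_algebra.
Set Implicit Arguments. Unset Strict Implicit. Unset Printing Implicit Defensive.
Import Order.TTheory GRing.Theory Num.Theory.
Local Open Scope ring_scope.

Definition dotv (R : realFieldType) (n : nat) (u v : 'cV[R]_n) : R :=
  (u^T *m v) 0 0.

Definition projmx (R : realFieldType) (n k : nat) (A : 'M[R]_(n, k)) : 'M[R]_n :=
  A *m invmx (A^T *m A) *m A^T.

Definition annmx (R : realFieldType) (n k : nat) (A : 'M[R]_(n, k)) : 'M[R]_n :=
  1%:M - projmx A.

Definition beta_2sls (R : realFieldType) (n k : nat) (Z : 'M[R]_(n, k))
  (x y : 'cV[R]_n) : R :=
  (dotv x (projmx Z *m x))^-1 * dotv x (projmx Z *m y).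

Definition zpartial (R : realFieldType) (n k : nat) (Z : 'M[R]_(n, k.+1))
  (l : 'I_k.+1) : 'cV[R]_n :=
  annmx (col' l Z) *m col l Z.

Definition beta_l (R : realFieldType) (n k : nat) (Z : 'M[R]_(n, k.+1))
  (x y : 'cV[R]_n) (l : 'I_k.+1) : R :=
  dotv (zpartial Z l) y / dotv (zpartial Z l) x.

Definition beta_star (R : realFieldType) (n k : nat) (Z : 'M[R]_(n, k.+1))
  (x y : 'cV[R]_n) (l : 'I_k.+1) : R :=
  dotv (col l Z) y / dotv (col l Z) x.

Definition pihat (R : realFieldType) (n k : nat) (Z : 'M[R]_(n, k))
  (x : 'cV[R]_n) : 'cV[R]_k :=
  invmx (Z^T *m Z) *m Z^T *m x.

Definition wgt (R : realFieldType) (n k : nat) (Z : 'M[R]_(n, k.+1))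
  (x : 'cV[R]_n) (l : 'I_k.+1) : R :=
  pihat Z x l 0 * dotv (col l Z) x * (dotv x (projmx Z *m x))^-1.

(* Main.v *)
Require Import Defs.
From HB Require Import structures.
From mathcomp Require Import all_boot all_order all_algebra.
From mathcomp Require Import ring lra.
Import Order.TTheory GRing.Theory Num.Theory.
Local Open Scope ring_scope.

Lemma sq0 (R : realFieldType) m (w : 'rV[R]_m) : w *m w^T = 0 -> w = 0.
Proof.
move=> H0; have := congr1 (fun M : 'M[R]_1 => M 0 0) H0; rewrite !mxE => /eqP.
rewrite psumr_eq0; last by move=> i _; rewrite mxE -expr2 sqr_ge0.
move=> /allP H; apply/rowP => i; rewrite mxE.
have := H i (mem_index_enum _); rewrite mxE /= -expr2 => /eqP/eqP.
by rewrite sqrf_eq0 => /eqP.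
Qed.

Lemma gram_unit (R : realFieldType) n m (A : 'M[R]_(n,m)) :
  row_free A^T -> A^T *m A \in unitmx.
Proof.
move=> fr; rewrite -row_free_unit; apply: inj_row_free => v hv.
have : (v *m A^T) *m (v *m A^T)^T = 0.
  by rewrite trmx_mul trmxK !mulmxA -(mulmxA v) hv mul0mx.
move/sq0/eqP; rewrite mulmx_free_eq0 //; by move/eqP.
Qed.

Lemma projT (R : realFieldType) n m (A : 'M[R]_(n,m)) :
  A^T *m A \in unitmx -> A^T *m projmx A = A^T.
Proof. by move=> hu; rewrite /projmx !mulmxA mulmxV // mul1mx. Qed.

Lemma projA (R : realFieldType) n m (A : 'M[R]_(n,m)) :
  A^T *m A \in unitmx -> projmx A *m A = A.
Proof. by move=> hu; rewrite /projmx -!mulmxA mulVmx // mulmx1. Qed.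

Lemma projmx_sym (R : realFieldType) n m (A : 'M[R]_(n,m)) :
  (projmx A)^T = projmx A.
Proof.
rewrite /projmx !trmx_mul trmxK trmx_inv trmx_mul trmxK mulmxA //.
Qed.

Lemma ann_sym (R : realFieldType) n m (A : 'M[R]_(n,m)) :
  (annmx A)^T = annmx A.
Proof. by rewrite /annmx linearB /= trmx1 projmx_sym. Qed.

Lemma dotvC (R : realFieldType) n (u v : 'cV[R]_n) : dotv u v = dotv v u.
Proof.
rewrite /dotv; have := congr1 (fun M : 'M[R]_1 => M 0 0) (trmx_mul u^T v).
by rewrite trmxK mxE => <-.
Qed.

Lemma dotvD (R : realFieldType) n (u v w : 'cV[R]_n) :
  dotv u (v + w) = dotv u v + dotv u w.
Proof. by rewrite /dotv mulmxDr mxE. Qed.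

Lemma dot_proj (R : realFieldType) n m (Z : 'M[R]_(n,m)) (u v : 'cV[R]_n) :
  dotv u (projmx Z *m v) = \sum_(l < m) pihat Z v l 0 * dotv (col l Z) u.
Proof.
have -> : projmx Z *m v = Z *m pihat Z v by rewrite /projmx /pihat !mulmxA.
rewrite /dotv mulmxA mxE; apply: eq_bigr => l _; rewrite mulrC; congr (_ * _).
rewrite !mxE; apply: eq_bigr => i _; rewrite !mxE mulrC //.
Qed.

Lemma dot_proj_sym (R : realFieldType) n m (Z : 'M[R]_(n,m)) (u v : 'cV[R]_n) :
  dotv u (projmx Z *m v) = dotv v (projmx Z *m u).
Proof.
rewrite [RHS]dotvC /dotv trmx_mul projmx_sym mulmxA //.
Qed.

Lemma fwl (R : realFieldType) n k (Z : 'M[R]_(n,k.+1)) (l : 'I_k.+1) (v : 'cV[R]_n) :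
  Z^T *m Z \in unitmx -> (col' l Z)^T *m col' l Z \in unitmx ->
  dotv (zpartial Z l) v = pihat Z v l 0 * dotv (zpartial Z l) (col l Z).
Proof.
move=> hu hA.
set zp := zpartial Z l; set p := pihat Z v; set A := col' l Z.
set w := v - Z *m p.
have hw : Z^T *m w = 0.
  by rewrite /w mulmxBr /p /pihat !mulmxA mulmxV // mul1mx subrr.
have hAw : A^T *m w = 0.
  apply/matrixP => i j; rewrite [RHS]mxE.
  have := congr1 (fun M : 'M[R]_(k.+1,1) => M (lift l i) j) hw; rewrite /= [RHS]mxE => <-.
  rewrite !mxE; apply: eq_bigr => r _; rewrite !mxE //.
have hzw : dotv zp w = 0.
  rewrite /dotv /zp /zpartial trmx_mul ann_sym -mulmxA /annmx mulmxBl mul1mx.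
  rewrite /projmx -!mulmxA hAw !mulmx0 subr0.
  have := congr1 (fun M : 'M[R]_(k.+1,1) => M l 0) hw; rewrite /= [RHS]mxE => <-.
  rewrite !mxE; apply: eq_bigr => r _; rewrite !mxE //.
have hzZ : forall j : 'I_k, (zp^T *m Z) 0 (lift l j) = 0.
  move=> j.
  have hMA : annmx A *m A = 0 by rewrite /annmx mulmxBl mul1mx projA // subrr.
  have : (zp^T *m A) 0 j = 0.
    by rewrite /zp /zpartial trmx_mul ann_sym -mulmxA -/A hMA mulmx0 mxE.
  move=> <-; rewrite !mxE; apply: eq_bigr => r _; rewrite !mxE //.
have -> : v = Z *m p + w by rewrite /w addrC subrK.
rewrite dotvD hzw addr0.
rewrite /dotv mulmxA mxE (bigD1_ord l) //= big1 ?addr0; last first.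
  by move=> j _; rewrite hzZ mul0r.
rewrite mulrC; congr (_ * _).
rewrite !mxE; apply: eq_bigr => r _; rewrite !mxE //.
Qed.

Lemma col'_free (R : realFieldType) n k (Z : 'M[R]_(n,k.+1)) (l : 'I_k.+1) :
  row_free Z^T -> row_free (col' l Z)^T.
Proof.
move=> fr; apply: inj_row_free => v hv.
set v' : 'rV[R]_k.+1 := \row_i (if unlift l i is Some j then v 0 j else 0).
have hv' : v' *m Z^T = 0.
  apply/rowP => c; rewrite !mxE (bigD1_ord l) //= !mxE unlift_none mul0r add0r.
  transitivity ((v *m (col' l Z)^T) 0 c); last by rewrite hv mxE.
  rewrite mxE; apply: eq_bigr => j _; rewrite !mxE liftK //.
move/eqP: hv'; rewrite mulmx_free_eq0 // => /eqP hv0.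
apply/rowP => j; have := congr1 (fun M : 'M[R]_(1,k.+1) => M 0 (lift l j)) hv0.
by rewrite /= !mxE liftK.
Qed.

Theorem mainTheorem2 (R : realFieldType) (n k : nat)
  (y x : 'cV[R]_n) (Z : 'M[R]_(n, k.+1))
  (hrank : \rank Z = k.+1)
  (hPZ : dotv x (projmx Z *m x) != 0)
  (hzx : forall l : 'I_k.+1, dotv (col l Z) x != 0)
  (hzpx : forall l : 'I_k.+1, dotv (zpartial Z l) x != 0) :
  \sum_(l < k.+1) wgt Z x l = 1 /\
  beta_2sls Z x y = \sum_(l < k.+1) wgt Z x l * beta_l Z x y l /\
  beta_2sls Z x y = \sum_(l < k.+1) wgt Z x l * beta_star Z x y l.
Proof.
have fr : row_free Z^T by rewrite /row_free mxrank_tr hrank.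
have hu := gram_unit _ _ _ _ fr.
have hA : forall l, (col' l Z)^T *m col' l Z \in unitmx.
  by move=> l; apply: gram_unit; apply: col'_free.
split.
  rewrite /wgt -mulr_suml -dot_proj mulfV //.
split.
  rewrite /beta_2sls [dotv x (projmx Z *m y)]dot_proj mulr_sumr; apply: eq_bigr => l _.
  have hx := hzpx l; rewrite /beta_l (fwl _ _ _ _ _ y hu (hA l)) (fwl _ _ _ _ _ x hu (hA l)).
  rewrite (fwl _ _ _ _ _ x hu (hA l)) mulf_eq0 negb_or in hx.
  case/andP: hx => h1 h2.
  rewrite /wgt; field; rewrite h1 h2 hPZ //.
rewrite /beta_2sls [dotv x (projmx Z *m y)]dot_proj_sym [dotv y _]dot_proj mulr_sumr; apply: eq_bigr => l _.
have hx := hzx l.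
rewrite /wgt /beta_star; field; rewrite hx hPZ //.
Qed.
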